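(* There exist a family $\mathcal F_0$ of $3$ axis-parallel rectangles and a constant $\varepsilon>0$ such that $\pi_L(\mathcal F_0)\ge \pi(\mathcal F_0)+\varepsilon$.
   Context: For a finite family $\mathcal F$ of closed axis-parallel rectangles in the plane, a point set $P\subset\mathbb R^2$ is $\mathcal F$-piercing if every translate of every rectangle in $\mathcal F$ contains a point of $P$. The density of a point set $P$ is $\limsup_{r\to\infty} |P\cap[-r,r]^2|/(2r)^2$. $\pi(\mathcal F)$ is the infimum of the densities of $\mathcal F$-piercing point sets, and $\pi_L(\mathcal F)$ is the infimum of the densities of $\mathcal F$-piercing lattices, where a lattice $\{iu+jv:i,j\in\mathbb Z\}$ ($u,v$ linearly independent) has density $1/|\det[u,v]|$. *)

(* Defs.v *)
From HB Require Import structures.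
From mathcomp Require Import all_boot all_order all_algebra.
From mathcomp Require Import all_classical all_reals all_analysis.
From mathcomp Require Import Rstruct Rstruct_topology finmap.
Set Implicit Arguments. Unset Strict Implicit. Unset Printing Implicit Defensive.
Import Order.TTheory GRing.Theory Num.Theory.
Local Open Scope classical_set_scope.
Local Open Scope ring_scope.

Notation R := Rdefinitions.R.

Definition point := (R * R)%type.

(* A closed axis-parallel rectangle up to translation is given by its
   side lengths (w, h); its translate by (x, y) is [x, x+w] x [y, y+h]. *)
Definition translate (rect : R * R) (x y : R) : set point :=
  [set p | x <= p.1 <= x + rect.1 /\ y <= p.2 <= y + rect.2].

Definition piercing (F : seq (R * R)) (P : set point) : Prop :=
  forall rect, rect \in F -> forall x y : R,
    exists p, P p /\ translate rect x y p.

Definition ecard (A : set point) : \bar R :=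
  if pselect (finite_set A) then ((#|` fset_set A|%fset)%:R)%:E else +oo%E.

Definition square (r : R) : set point :=
  [set p | -r <= p.1 <= r /\ -r <= p.2 <= r].

Definition density (P : set point) : \bar R :=
  ereal_inf [set ereal_sup
     [set (ecard (P `&` square r) * ((2 * r) ^+ 2)^-1%:E)%E | r in [set r | R0 < r]]
   | R0 in [set: R]].

Definition det2 (u v : point) : R := u.1 * v.2 - u.2 * v.1.

Definition lattice (u v : point) : set point :=
  [set p | exists i j : int, p = (i%:~R * u.1 + j%:~R * v.1, i%:~R * u.2 + j%:~R * v.2)].

Definition pi_dens (F : seq (R * R)) : \bar R :=
  ereal_inf [set density P | P in [set P | piercing F P]].

Definition piL_dens (F : seq (R * R)) : \bar R :=
  ereal_inf [set (`|det2 uv.1 uv.2|^-1)%:E |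
     uv in [set uv : point * point | det2 uv.1 uv.2 != 0 /\ piercing F (lattice uv.1 uv.2)]].

(* Main.v *)
Require Import Defs.
From HB Require Import structures.
From mathcomp Require Import all_boot all_order all_algebra.
From mathcomp Require Import all_classical all_reals all_analysis.
From mathcomp Require Import Rstruct Rstruct_topology finmap.
From mathcomp Require Import ring lra zify.
Import Order.TTheory GRing.Theory Num.Theory.
Set Implicit Arguments. Unset Strict Implicit. Unset Printing Implicit Defensive.
Local Open Scope classical_set_scope.
Local Open Scope ring_scope.

(* Proof outline:
   - F0 = {1x1, 1/3 x 4, 1/6 x 6}.
   - P0 = rows y = k (k in Z) with points at x in (Z + sig(k mod 6)/6),
     sig = (0,2,4,1,5,3)/6 shifts; P0 pierces F0 and has density <= 1.01.
   - Every F0-piercing lattice has |det| <= 99/100 (lat_bound), so pi_L >= 100/99. *)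



Lemma lat_det (u v p q : (R * R)%type) : lattice u v p -> lattice u v q ->
  exists k : int, det2 p q = k%:~R * `|det2 u v|.
Proof.
move=> [i1 [j1 ->]] [i2 [j2 ->]].
have E : det2 (i1%:~R * u.1 + j1%:~R * v.1, i1%:~R * u.2 + j1%:~R * v.2)
               (i2%:~R * u.1 + j2%:~R * v.1, i2%:~R * u.2 + j2%:~R * v.2)
         = (i1 * j2 - j1 * i2)%:~R * det2 u v.
  rewrite /det2 /= rmorphB /= !rmorphM /=; ring.
rewrite E; have [d0|d0] := leP 0 (det2 u v).
  by exists (i1 * j2 - j1 * i2); rewrite ger0_norm.
exists (- (i1 * j2 - j1 * i2)); rewrite ltr0_norm // rmorphN /=; ring.
Qed.

Lemma int_between (i a b : int) (D : R) : 0 < D ->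
  a%:~R * D < i%:~R * D -> i%:~R * D < b%:~R * D -> (a < i)%R /\ (i < b)%R.
Proof.
move=> D0 h1 h2; split.
  by rewrite -(ltr_int R) -(ltr_pM2r D0).
by rewrite -(ltr_int R) -(ltr_pM2r D0).
Qed.

Lemma basis_repr (u v0 w v p : (R * R)%type) (D : R) : D = `|det2 u v0| -> 0 < D ->
  lattice u v0 w -> lattice u v0 v -> det2 w v = D -> lattice u v0 p ->
  exists i j : int, p = (i%:~R * w.1 + j%:~R * v.1, i%:~R * w.2 + j%:~R * v.2)
     /\ det2 p v = i%:~R * D.
Proof.
move=> DE D0 Lw Lv Dw Lp.
have [i Hi] := lat_det Lp Lv.
have [j Hj] := lat_det Lw Lp.
rewrite -DE in Hi Hj.
exists i, j; split => //.
have Dn0 : D != 0 by rewrite gt_eqF.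
move: Hi Hj Dw; rewrite /det2 => Hi Hj Dw.
clear Lp; case: p Hi Hj => p1 p2 /= Hi Hj.
congr (_, _).
  apply: (mulfI Dn0); rewrite -{1}Dw.
  have -> : (w.1 * v.2 - w.2 * v.1) * p1 = (p1 * v.2 - p2 * v.1) * w.1 + (w.1 * p2 - w.2 * p1) * v.1 by ring.
  rewrite Hi Hj; ring.
apply: (mulfI Dn0); rewrite -{1}Dw.
have -> : (w.1 * v.2 - w.2 * v.1) * p2 = (p1 * v.2 - p2 * v.1) * w.2 + (w.1 * p2 - w.2 * p1) * v.2 by ring.
rewrite Hi Hj; ring.
Qed.

Lemma det_box (p v : (R * R)%type) (C a b x y : R) : 0 < v.2 -> `|v.1| <= 1/12 -> 0 <= b ->
  x = (C + (y + b/2) * v.1) / v.2 - a/2 -> x <= p.1 <= x + a -> y <= p.2 <= y + b ->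
  C - a * v.2 / 2 - b/24 <= det2 p v <= C + a * v.2 / 2 + b/24.
Proof.
move=> V0 hv1 b0 xE /andP[px1 px2] /andP[py1 py2].
have xV : x * v.2 = C + (y + b/2) * v.1 - a * v.2 / 2.
  by rewrite xE; field; rewrite gt_eqF.
have h1 : x * v.2 <= p.1 * v.2 by rewrite ler_wpM2r // ltW.
have h2 : p.1 * v.2 <= (x + a) * v.2 by rewrite ler_wpM2r // ltW.
have h3 : `|(p.2 - (y + b/2)) * v.1| <= b/2 * (1/12).
  rewrite normrM; apply: ler_pM => //.
  rewrite ler_norml; apply/andP; split; lra.
move: h3; rewrite ler_norml => /andP[h3 h4].
rewrite /det2; apply/andP; split; nra.
Qed.

Lemma intcase (m k : int) : (m%:~R <= k%:~R :> R) \/ (k%:~R + 1 <= m%:~R :> R).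
Proof.
case: (lerP m k) => h; [left; by rewrite ler_int | right].
have : (k + 1 <= m)%R by lia.
by rewrite -(ler_int R) rmorphD.
Qed.

Lemma gap_key (t V y : R) : 0 < V ->
  (forall i : int, (0 <= i)%R -> (i <= 5)%R -> exists mb : int,
     i%:~R * t + mb%:~R * V < y /\ y + 1 < i%:~R * t + (mb%:~R + 1) * V) ->
  forall i m : int, (0 <= i)%R -> (i <= 5)%R ->
     ~ (y <= i%:~R * t + m%:~R * V /\ i%:~R * t + m%:~R * V <= y + 1).
Proof.
move=> V0 H i m hi0 hi5 [h1 h2].
have [mb [k1 k2]] := H i hi0 hi5.
case: (intcase m mb) => hm.
  have : m%:~R * V <= mb%:~R * V by rewrite ler_wpM2r // ltW.
  lra.
have : (mb%:~R + 1) * V <= m%:~R * V by rewrite ler_wpM2r // ltW.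
lra.
Qed.



Lemma gap5 (t V : R) : 29/5 < V -> V <= 6 + 1/100 -> V - 4 - 1/100 <= t -> t <= 4 + 1/100 ->
  exists y : R, forall i m : int, (0 <= i)%R -> (i <= 5)%R ->
     ~ (y <= i%:~R * t + m%:~R * V /\ i%:~R * t + m%:~R * V <= y + 1).
Proof.
move=> hV1 hV2 ht1 ht2.
have V0 : 0 < V by lra.
have [h1|h1] := lerP t (13/32 * V).
  exists (2 * t - 9/2 * V - 1/2); apply: gap_key => // i hi0 hi5.
  have [->|[->|[->|[->|[->|->]]]]] : (i = 0 \/ i = 1 \/ i = 2 \/ i = 3 \/ i = 4 \/ i = 5)%R by lia.
  - by exists (-4); split; lra.
  - by exists (-5); split; lra.
  - by exists (-5); split; lra.
  - by exists (-5); split; lra.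
  - by exists (-6); split; lra.
  - by exists (-6); split; lra.
have [h2|h2] := lerP t (17/32 * V).
  exists (5/2 * t - 9/2 * V - 1/2); apply: gap_key => // i hi0 hi5.
  have [->|[->|[->|[->|[->|->]]]]] : (i = 0 \/ i = 1 \/ i = 2 \/ i = 3 \/ i = 4 \/ i = 5)%R by lia.
  - by exists (-4); split; lra.
  - by exists (-4); split; lra.
  - by exists (-5); split; lra.
  - by exists (-5); split; lra.
  - by exists (-6); split; lra.
  - by exists (-6); split; lra.
have [h3|h3] := lerP t (19/32 * V).
  exists (5/2 * t - 5 * V - 1/2); apply: gap_key => // i hi0 hi5.
  have [->|[->|[->|[->|[->|->]]]]] : (i = 0 \/ i = 1 \/ i = 2 \/ i = 3 \/ i = 4 \/ i = 5)%R by lia.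
  - by exists (-4); split; lra.
  - by exists (-5); split; lra.
  - by exists (-5); split; lra.
  - by exists (-6); split; lra.
  - by exists (-6); split; lra.
  - by exists (-7); split; lra.
exists (2 * t - 9/2 * V - 1/2); apply: gap_key => // i hi0 hi5.
have [->|[->|[->|[->|[->|->]]]]] : (i = 0 \/ i = 1 \/ i = 2 \/ i = 3 \/ i = 4 \/ i = 5)%R by lia.
- by exists (-4); split; lra.
- by exists (-4); split; lra.
- by exists (-5); split; lra.
- by exists (-6); split; lra.
- by exists (-6); split; lra.
- by exists (-7); split; lra.
Qed.



Definition F0 : seq (R * R) := [:: (1, 1); (1/3, 4); (1/6, 6)].

Lemma pierce_get (P : set (R * R)) (a b : R) : piercing F0 P -> (a, b) \in F0 ->
  forall x y, exists p, P p /\ (x <= p.1 <= x + a) /\ (y <= p.2 <= y + b).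
Proof. by move=> HP hin x y; have [p [Pp Tp]] := HP _ hin x y; exists p. Qed.

Lemma lat_bound (u v0 : R * R) : det2 u v0 != 0 -> piercing F0 (lattice u v0) ->
  `|det2 u v0| <= 99/100.
Proof.
move=> dn0 HP.
rewrite leNgt; apply/negP.
move Dd : (`|det2 u v0|) => D HD.
have D0 : 0 < D by lra.
have m6 : (1/6, 6) \in F0 by rewrite !inE eqxx ?orbT.
have m4 : (1/3, 4) \in F0 by rewrite !inE eqxx ?orbT.
have m1 : (1, 1) \in F0 by rewrite !inE eqxx ?orbT.
have H6 := pierce_get HP m6.
have H4 := pierce_get HP m4.
have H1 := pierce_get HP m1.
have [v [Lv [hva hvb]]] := H6 (-1/12) (1/100).
move/andP: hva => [hv1a hv1b]; move/andP: hvb => [hVa hVb].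
have V0 : 0 < v.2 by lra.
have hv1 : `|v.1| <= 1/12 by rewrite ler_norml; apply/andP; split; lra.
have [w [Lw [hw1 hw2]]] := H6 ((D + (0 + 6/2) * v.1) / v.2 - 1/6/2) 0.
have /andP[hdw1 hdw2] := det_box V0 hv1 (ler0n _ 6) erefl hw1 hw2.
have hwD : det2 w v = D.
  have [k hk] := lat_det Lw Lv.
  rewrite Dd in hk.
  have [k1 k2] : (0 < k)%R /\ (k < 2)%R.
    apply: (int_between D0); rewrite -hk; clear -hdw1 hdw2 hVb HD; lra.
  have k1E : k = 1 by clear -k1 k2; lia.
  by rewrite hk k1E mul1r.
clear hw1.
have hwD' : w.1 * v.2 - w.2 * v.1 = D by rewrite -hwD.
have hV : 29/5 < v.2.
  have [hs|hs] := lerP 0 v.1.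
  - have hvV1 : 0 <= v.1 * v.2 by apply: mulr_ge0 => //; lra.
    have hvV2 : v.1 * v.2 <= 1/12 * (1/100 + 6) by apply: ler_pM => //; lra.
    have [p [Lp [hp1 hp2]]] := H6 (w.1 + v.1 - 1/6 - 1/1000) (w.2 + 1/100).
    have xE : w.1 + v.1 - 1/6 - 1/1000 =
      (((w.1 + v.1 - 1/6 - 1/1000) + 1/6/2) * v.2 - ((w.2 + 1/100) + 6/2) * v.1
        + ((w.2 + 1/100) + 6/2) * v.1) / v.2 - 1/6/2.
      by field; rewrite gt_eqF.
    have /andP[hd1 hd2] := det_box V0 hv1 (ler0n _ 6) xE hp1 hp2.
    clear xE.
    have hC : ((w.1 + v.1 - 1/6 - 1/1000) + 1/6/2) * v.2 - ((w.2 + 1/100) + 6/2) * v.1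
       = D + v.1 * v.2 - v.2/12 - v.2/1000 - (3 + 1/100) * v.1 by rewrite -hwD'; field.
    rewrite hC in hd1 hd2; clear hC.
    have [i [j [pE hpi]]] := basis_repr (esym Dd) D0 Lw Lv hwD Lp.
    have [i1 i2] : (-1 < i)%R /\ (i < 2)%R.
      apply: (int_between D0); rewrite -hpi;
      clear -hd1 hd2 hvV1 hvV2 hs hv1b hVb HD;
      move: hd1 hd2 hvV1 hvV2; move: (v.1 * v.2) (det2 p v) => a d; lra.
    have [iE|iE] : i = 0 \/ i = 1 by clear -i1 i2; lia.
    + rewrite pE iE /= in hp1 hp2.
      move/andP: hp1 => [hp1 _]; move/andP: hp2 => [_ hp2].
      have h1 : w.1 + v.1 - 1/6 - 1/1000 <= j%:~R * v.1 by clear -hp1; lra.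
      have h2 : j%:~R * v.2 <= w.2 + 1/100 + 6 by clear -hp2; lra.
      have h1' := ler_wpM2r (ltW V0) h1.
      have h2' := ler_wpM2r hs h2.
      have h3 : (6 + 1/100 - v.2) * v.1 <= (6 + 1/100 - v.2) * (1/12).
        by apply: ler_wpM2l; lra.
      have e1 : (w.1 + v.1 - 1/6 - 1/1000) * v.2 = D + w.2 * v.1 + v.1 * v.2 - v.2/6 - v.2/1000
        by rewrite -hwD'; field.
      have e2 : (j%:~R * v.1) * v.2 = (j%:~R * v.2) * v.1 by ring.
      rewrite e1 e2 in h1'; clear e1 e2.
      have e3 : (w.2 + 1/100 + 6) * v.1 = w.2 * v.1 + (1/100 + 6) * v.1 by field.
      have e4 : (6 + 1/100 - v.2) * v.1 = (6 + 1/100) * v.1 - v.1 * v.2 by field.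
      rewrite e3 in h2'; rewrite e4 in h3; clear e3 e4.
      clear -h1' h2' h3 HD hVb.
      move: h1' h2' h3; move: (v.1 * v.2) (w.2 * v.1) (j%:~R * v.2 * v.1) => a b c.
      lra.
    + rewrite pE iE /= in hp1 hp2.
      move/andP: hp1 => [_ hp1]; move/andP: hp2 => [hp2 _].
      have j0 : (0 < j)%R.
        rewrite ltNge; apply/negP => hj.
        have : j%:~R * v.2 <= 0.
          by apply: mulr_le0_ge0; [rewrite -(ler_int R) in hj | lra].
        clear -hp2; lra.
      have hj1 : 1 <= j%:~R :> R by rewrite (ler_int R 1 j); clear -j0; lia.
      have : 0 <= (j%:~R - 1) * v.1 by apply: mulr_ge0; lra.
      clear -hp1; lra.
  - have hvV1 : v.1 * v.2 <= 0 by apply: mulr_le0_ge0; lra.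
    have hvV2 : - (1/12 * (1/100 + 6)) <= v.1 * v.2.
      have : (- v.1) * v.2 <= 1/12 * (1/100 + 6) by apply: ler_pM; lra.
      rewrite mulNr; lra.
    have [p [Lp [hp1 hp2]]] := H6 (w.1 - v.1 - 1/6 - 1/1000) (w.2 - 6 - 1/100).
    have xE : w.1 - v.1 - 1/6 - 1/1000 =
      (((w.1 - v.1 - 1/6 - 1/1000) + 1/6/2) * v.2 - ((w.2 - 6 - 1/100) + 6/2) * v.1
        + ((w.2 - 6 - 1/100) + 6/2) * v.1) / v.2 - 1/6/2.
      by field; rewrite gt_eqF.
    have /andP[hd1 hd2] := det_box V0 hv1 (ler0n _ 6) xE hp1 hp2.
    clear xE.
    have hC : ((w.1 - v.1 - 1/6 - 1/1000) + 1/6/2) * v.2 - ((w.2 - 6 - 1/100) + 6/2) * v.1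
       = D - v.1 * v.2 - v.2/12 - v.2/1000 + (3 + 1/100) * v.1 by rewrite -hwD'; field.
    rewrite hC in hd1 hd2; clear hC.
    have [i [j [pE hpi]]] := basis_repr (esym Dd) D0 Lw Lv hwD Lp.
    have [i1 i2] : (-1 < i)%R /\ (i < 2)%R.
      apply: (int_between D0); rewrite -hpi;
      clear -hd1 hd2 hvV1 hvV2 hs hv1a hVb HD;
      move: hd1 hd2 hvV1 hvV2; move: (v.1 * v.2) (det2 p v) => a d; lra.
    have [iE|iE] : i = 0 \/ i = 1 by clear -i1 i2; lia.
    + rewrite pE iE /= in hp1 hp2.
      move/andP: hp1 => [hp1 _]; move/andP: hp2 => [hp2 _].
      have h1 : w.1 - v.1 - 1/6 - 1/1000 <= j%:~R * v.1 by clear -hp1; lra.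
      have h2 : 0 <= j%:~R * v.2 - (w.2 - 6 - 1/100) by clear -hp2; lra.
      have h1' := ler_wpM2r (ltW V0) h1.
      have h2' : (j%:~R * v.2 - (w.2 - 6 - 1/100)) * v.1 <= 0 by apply: mulr_ge0_le0 => //; lra.
      have h3 : (v.2 - (6 + 1/100)) * (v.1 + 1/12) <= 0 by apply: mulr_le0_ge0; lra.
      have e1 : (w.1 - v.1 - 1/6 - 1/1000) * v.2 = D + w.2 * v.1 - v.1 * v.2 - v.2/6 - v.2/1000
        by rewrite -hwD'; field.
      have e2 : (j%:~R * v.1) * v.2 = (j%:~R * v.2) * v.1 by ring.
      rewrite e1 e2 in h1'; clear e1 e2.
      have e3 : (j%:~R * v.2 - (w.2 - 6 - 1/100)) * v.1
        = (j%:~R * v.2) * v.1 - w.2 * v.1 + (6 + 1/100) * v.1 by field.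
      have e4 : (v.2 - (6 + 1/100)) * (v.1 + 1/12)
        = v.1 * v.2 + v.2 / 12 - (6 + 1/100) * v.1 - (6 + 1/100) / 12 by field.
      rewrite e3 in h2'; rewrite e4 in h3; clear e3 e4.
      clear -h1' h2' h3 HD hVb.
      move: h1' h2' h3; move: (v.1 * v.2) (w.2 * v.1) (j%:~R * v.2 * v.1) => a b c.
      lra.
    + rewrite pE iE /= in hp1 hp2.
      move/andP: hp1 => [_ hp1]; move/andP: hp2 => [_ hp2].
      have j0 : (j < 0)%R.
        rewrite ltNge; apply/negP => hj.
        have : 0 <= j%:~R * v.2.
          by apply: mulr_ge0; [rewrite (ler_int R 0 j) | lra].
        clear -hp2; lra.
      have hj1 : j%:~R + 1 <= 0 :> R.
        have : (j + 1 <= 0)%R by clear -j0; lia.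
        by rewrite -(ler_int R) rmorphD.
      have : 0 <= (j%:~R + 1) * v.1 by apply: mulr_le0; lra.
      clear -hp1; lra.
have [pa [Lpa [hpa1 hpa2]]] := H4 ((D/2 + (1/100 + 4/2) * v.1) / v.2 - 1/3/2) (1/100).
have /andP[hda1 hda2] := det_box V0 hv1 (ler0n _ 4) erefl hpa1 hpa2.
clear hpa1.
have [ia [ja [paE hpai]]] := basis_repr (esym Dd) D0 Lw Lv hwD Lpa.
have [ia1 ia2] : (-1 < ia)%R /\ (ia < 2)%R.
  apply: (int_between D0); rewrite -hpai; clear -hda1 hda2 hVb HD;
  move: hda1 hda2; move: (det2 pa v) => d; lra.
have ia1E : ia = 1.
  have [iE|iE] : ia = 0 \/ ia = 1 by clear -ia1 ia2; lia.
  - exfalso; rewrite paE iE /= in hpa2; move/andP: hpa2 => [h1 h2].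
    case: (intcase ja 0) => hj.
    + have : ja%:~R * v.2 <= 0%:~R * v.2 by apply: ler_wpM2r => //; lra.
      clear -h1; lra.
    + have : (0%:~R + 1) * v.2 <= ja%:~R * v.2 by apply: ler_wpM2r => //; lra.
      clear -h2 hV; lra.
  - exact iE.
rewrite paE ia1E /= in hpa2; move/andP: hpa2 => [hpa2l hpa2r].
have [pb [Lpb [hpb1 hpb2]]] := H4 ((D/2 + ((-4 - 1/100) + 4/2) * v.1) / v.2 - 1/3/2) (-4 - 1/100).
have /andP[hdb1 hdb2] := det_box V0 hv1 (ler0n _ 4) erefl hpb1 hpb2.
clear hpb1.
have [ib [jb [pbE hpbi]]] := basis_repr (esym Dd) D0 Lw Lv hwD Lpb.
have [ib1 ib2] : (-1 < ib)%R /\ (ib < 2)%R.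
  apply: (int_between D0); rewrite -hpbi; clear -hdb1 hdb2 hVb HD;
  move: hdb1 hdb2; move: (det2 pb v) => d; lra.
have ib1E : ib = 1.
  have [iE|iE] : ib = 0 \/ ib = 1 by clear -ib1 ib2; lia.
  - exfalso; rewrite pbE iE /= in hpb2; move/andP: hpb2 => [h1 h2].
    case: (intcase jb (-1)) => hj.
    + have : jb%:~R * v.2 <= (-1)%:~R * v.2 by apply: ler_wpM2r => //; lra.
      clear -h1 hV; lra.
    + have : ((-1)%:~R + 1) * v.2 <= jb%:~R * v.2 by apply: ler_wpM2r => //; lra.
      clear -h2; lra.
  - exact iE.
rewrite pbE ib1E /= in hpb2; move/andP: hpb2 => [hpb2l hpb2r].
have hjab : jb%:~R = ja%:~R - 1 :> R.
  have hk : (ja - jb)%:~R * v.2 = ja%:~R * v.2 - jb%:~R * v.2 :> R.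
    by rewrite rmorphB /= mulrBl.
  have k1 : (0 < ja - jb)%R.
    case: (intcase (ja - jb) 0) => hj.
    + have : (ja - jb)%:~R * v.2 <= 0%:~R * v.2 by apply: ler_wpM2r => //; lra.
      rewrite hk => h; exfalso; clear -h hpa2l hpb2r; lra.
    + by rewrite -(ltr_int R); lra.
  have k2 : (ja - jb < 2)%R.
    case: (intcase (ja - jb) 1) => hj.
    + by rewrite -(ltr_int R); lra.
    + have : (1%:~R + 1) * v.2 <= (ja - jb)%:~R * v.2 by apply: ler_wpM2r => //; lra.
      rewrite hk => h; exfalso; clear -h hpa2r hpb2l hV; lra.
  have : jb = ja - 1 by clear -k1 k2; lia.
  by move=> ->; rewrite rmorphB.
rewrite hjab in hpb2l hpb2r.
have hVb' : v.2 <= 6 + 1/100 by clear -hVb; lra.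
have ht1 : v.2 - 4 - 1/100 <= w.2 + ja%:~R * v.2 by clear -hpb2l; lra.
have ht2 : w.2 + ja%:~R * v.2 <= 4 + 1/100 by clear -hpa2r; lra.
have [y0 Hy] := gap5 hV hVb' ht1 ht2.
have [q [Lq [hq1 hq2]]] := H1 ((5 * D / 2 + (y0 + 1/2) * v.1) / v.2 - 1/2) y0.
have /andP[hdq1 hdq2] := det_box V0 hv1 ler01 erefl hq1 hq2.
clear hq1.
have [iq [jq [qE hqi]]] := basis_repr (esym Dd) D0 Lw Lv hwD Lq.
have [iq1 iq2] : (-1 < iq)%R /\ (iq < 6)%R.
  apply: (int_between D0); rewrite -hqi; clear -hdq1 hdq2 hVb HD;
  move: hdq1 hdq2; move: (det2 q v) => d; lra.
rewrite qE /= in hq2; move/andP: hq2 => [hq2l hq2r].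
have e : iq%:~R * (w.2 + ja%:~R * v.2) + (jq - iq * ja)%:~R * v.2
   = iq%:~R * w.2 + jq%:~R * v.2 :> R by rewrite rmorphB rmorphM /=; ring.
apply: (Hy iq (jq - iq * ja)).
- by clear -iq1; lia.
- by clear -iq2; lia.
- by rewrite e; split.
Qed.



Definition sig (k : int) : int := (nth 0%N [:: 0; 2; 4; 1; 5; 3]%N (absz (k %% 6)%Z))%:Z.

Definition P0 : set (R * R) :=
  [set p | exists a k : int, p = (a%:~R / 6, k%:~R) /\ (a %% 6)%Z = sig k].

Lemma combS (c d : int) : (0 <= c)%R -> (c < 6)%R -> (0 <= d)%R -> (d < 6)%R ->
  exists r dl : int, [/\ (0 <= r)%R, (r <= 0)%R, (0 <= dl)%R, (dl <= 5)%R & ((c + dl) %% 6)%Z = sig (d + r)].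
Proof.
move=> c0 c6 d0 d6.
have [->|[->|[->|[->|[->|->]]]]] : c = 0 \/ c = 1 \/ c = 2 \/ c = 3 \/ c = 4 \/ c = 5 by lia.
- have [->|[->|[->|[->|[->|->]]]]] : d = 0 \/ d = 1 \/ d = 2 \/ d = 3 \/ d = 4 \/ d = 5 by lia.
  + by exists 0, 0; vm_compute.
  + by exists 0, 2; vm_compute.
  + by exists 0, 4; vm_compute.
  + by exists 0, 1; vm_compute.
  + by exists 0, 5; vm_compute.
  + by exists 0, 3; vm_compute.
- have [->|[->|[->|[->|[->|->]]]]] : d = 0 \/ d = 1 \/ d = 2 \/ d = 3 \/ d = 4 \/ d = 5 by lia.
  + by exists 0, 5; vm_compute.
  + by exists 0, 1; vm_compute.
  + by exists 0, 3; vm_compute.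
  + by exists 0, 0; vm_compute.
  + by exists 0, 4; vm_compute.
  + by exists 0, 2; vm_compute.
- have [->|[->|[->|[->|[->|->]]]]] : d = 0 \/ d = 1 \/ d = 2 \/ d = 3 \/ d = 4 \/ d = 5 by lia.
  + by exists 0, 4; vm_compute.
  + by exists 0, 0; vm_compute.
  + by exists 0, 2; vm_compute.
  + by exists 0, 5; vm_compute.
  + by exists 0, 3; vm_compute.
  + by exists 0, 1; vm_compute.
- have [->|[->|[->|[->|[->|->]]]]] : d = 0 \/ d = 1 \/ d = 2 \/ d = 3 \/ d = 4 \/ d = 5 by lia.
  + by exists 0, 3; vm_compute.
  + by exists 0, 5; vm_compute.
  + by exists 0, 1; vm_compute.
  + by exists 0, 4; vm_compute.
  + by exists 0, 2; vm_compute.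
  + by exists 0, 0; vm_compute.
- have [->|[->|[->|[->|[->|->]]]]] : d = 0 \/ d = 1 \/ d = 2 \/ d = 3 \/ d = 4 \/ d = 5 by lia.
  + by exists 0, 2; vm_compute.
  + by exists 0, 4; vm_compute.
  + by exists 0, 0; vm_compute.
  + by exists 0, 3; vm_compute.
  + by exists 0, 1; vm_compute.
  + by exists 0, 5; vm_compute.
- have [->|[->|[->|[->|[->|->]]]]] : d = 0 \/ d = 1 \/ d = 2 \/ d = 3 \/ d = 4 \/ d = 5 by lia.
  + by exists 0, 1; vm_compute.
  + by exists 0, 3; vm_compute.
  + by exists 0, 5; vm_compute.
  + by exists 0, 2; vm_compute.
  + by exists 0, 0; vm_compute.
  + by exists 0, 4; vm_compute.
Qed.

Lemma combR4 (c d : int) : (0 <= c)%R -> (c < 6)%R -> (0 <= d)%R -> (d < 6)%R ->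
  exists r dl : int, [/\ (0 <= r)%R, (r <= 3)%R, (0 <= dl)%R, (dl <= 1)%R & ((c + dl) %% 6)%Z = sig (d + r)].
Proof.
move=> c0 c6 d0 d6.
have [->|[->|[->|[->|[->|->]]]]] : c = 0 \/ c = 1 \/ c = 2 \/ c = 3 \/ c = 4 \/ c = 5 by lia.
- have [->|[->|[->|[->|[->|->]]]]] : d = 0 \/ d = 1 \/ d = 2 \/ d = 3 \/ d = 4 \/ d = 5 by lia.
  + by exists 0, 0; vm_compute.
  + by exists 2, 1; vm_compute.
  + by exists 1, 1; vm_compute.
  + by exists 0, 1; vm_compute.
  + by exists 2, 0; vm_compute.
  + by exists 1, 0; vm_compute.
- have [->|[->|[->|[->|[->|->]]]]] : d = 0 \/ d = 1 \/ d = 2 \/ d = 3 \/ d = 4 \/ d = 5 by lia.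
  + by exists 1, 1; vm_compute.
  + by exists 0, 1; vm_compute.
  + by exists 1, 0; vm_compute.
  + by exists 0, 0; vm_compute.
  + by exists 3, 1; vm_compute.
  + by exists 2, 1; vm_compute.
- have [->|[->|[->|[->|[->|->]]]]] : d = 0 \/ d = 1 \/ d = 2 \/ d = 3 \/ d = 4 \/ d = 5 by lia.
  + by exists 1, 0; vm_compute.
  + by exists 0, 0; vm_compute.
  + by exists 3, 1; vm_compute.
  + by exists 2, 1; vm_compute.
  + by exists 1, 1; vm_compute.
  + by exists 0, 1; vm_compute.
- have [->|[->|[->|[->|[->|->]]]]] : d = 0 \/ d = 1 \/ d = 2 \/ d = 3 \/ d = 4 \/ d = 5 by lia.
  + by exists 2, 1; vm_compute.
  + by exists 1, 1; vm_compute.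
  + by exists 0, 1; vm_compute.
  + by exists 2, 0; vm_compute.
  + by exists 1, 0; vm_compute.
  + by exists 0, 0; vm_compute.
- have [->|[->|[->|[->|[->|->]]]]] : d = 0 \/ d = 1 \/ d = 2 \/ d = 3 \/ d = 4 \/ d = 5 by lia.
  + by exists 2, 0; vm_compute.
  + by exists 1, 0; vm_compute.
  + by exists 0, 0; vm_compute.
  + by exists 1, 1; vm_compute.
  + by exists 0, 1; vm_compute.
  + by exists 3, 0; vm_compute.
- have [->|[->|[->|[->|[->|->]]]]] : d = 0 \/ d = 1 \/ d = 2 \/ d = 3 \/ d = 4 \/ d = 5 by lia.
  + by exists 0, 1; vm_compute.
  + by exists 3, 0; vm_compute.
  + by exists 2, 0; vm_compute.
  + by exists 1, 0; vm_compute.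
  + by exists 0, 0; vm_compute.
  + by exists 1, 1; vm_compute.
Qed.

Lemma combR6 (c d : int) : (0 <= c)%R -> (c < 6)%R -> (0 <= d)%R -> (d < 6)%R ->
  exists r dl : int, [/\ (0 <= r)%R, (r <= 5)%R, (0 <= dl)%R, (dl <= 0)%R & ((c + dl) %% 6)%Z = sig (d + r)].
Proof.
move=> c0 c6 d0 d6.
have [->|[->|[->|[->|[->|->]]]]] : c = 0 \/ c = 1 \/ c = 2 \/ c = 3 \/ c = 4 \/ c = 5 by lia.
- have [->|[->|[->|[->|[->|->]]]]] : d = 0 \/ d = 1 \/ d = 2 \/ d = 3 \/ d = 4 \/ d = 5 by lia.
  + by exists 0, 0; vm_compute.
  + by exists 5, 0; vm_compute.
  + by exists 4, 0; vm_compute.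
  + by exists 3, 0; vm_compute.
  + by exists 2, 0; vm_compute.
  + by exists 1, 0; vm_compute.
- have [->|[->|[->|[->|[->|->]]]]] : d = 0 \/ d = 1 \/ d = 2 \/ d = 3 \/ d = 4 \/ d = 5 by lia.
  + by exists 3, 0; vm_compute.
  + by exists 2, 0; vm_compute.
  + by exists 1, 0; vm_compute.
  + by exists 0, 0; vm_compute.
  + by exists 5, 0; vm_compute.
  + by exists 4, 0; vm_compute.
- have [->|[->|[->|[->|[->|->]]]]] : d = 0 \/ d = 1 \/ d = 2 \/ d = 3 \/ d = 4 \/ d = 5 by lia.
  + by exists 1, 0; vm_compute.
  + by exists 0, 0; vm_compute.
  + by exists 5, 0; vm_compute.
  + by exists 4, 0; vm_compute.
  + by exists 3, 0; vm_compute.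
  + by exists 2, 0; vm_compute.
- have [->|[->|[->|[->|[->|->]]]]] : d = 0 \/ d = 1 \/ d = 2 \/ d = 3 \/ d = 4 \/ d = 5 by lia.
  + by exists 5, 0; vm_compute.
  + by exists 4, 0; vm_compute.
  + by exists 3, 0; vm_compute.
  + by exists 2, 0; vm_compute.
  + by exists 1, 0; vm_compute.
  + by exists 0, 0; vm_compute.
- have [->|[->|[->|[->|[->|->]]]]] : d = 0 \/ d = 1 \/ d = 2 \/ d = 3 \/ d = 4 \/ d = 5 by lia.
  + by exists 2, 0; vm_compute.
  + by exists 1, 0; vm_compute.
  + by exists 0, 0; vm_compute.
  + by exists 5, 0; vm_compute.
  + by exists 4, 0; vm_compute.
  + by exists 3, 0; vm_compute.
- have [->|[->|[->|[->|[->|->]]]]] : d = 0 \/ d = 1 \/ d = 2 \/ d = 3 \/ d = 4 \/ d = 5 by lia.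
  + by exists 4, 0; vm_compute.
  + by exists 3, 0; vm_compute.
  + by exists 2, 0; vm_compute.
  + by exists 1, 0; vm_compute.
  + by exists 0, 0; vm_compute.
  + by exists 5, 0; vm_compute.
Qed.

Lemma comb_lift (rmax dmax : int) :
  (forall c d : int, (0 <= c)%R -> (c < 6)%R -> (0 <= d)%R -> (d < 6)%R ->
     exists r dl : int, [/\ (0 <= r)%R, (r <= rmax)%R, (0 <= dl)%R, (dl <= dmax)%R
                          & ((c + dl) %% 6)%Z = sig (d + r)]) ->
  forall q K : int, exists r dl : int, [/\ (0 <= r)%R, (r <= rmax)%R, (0 <= dl)%R, (dl <= dmax)%R
                          & ((q + dl) %% 6)%Z = sig (K + r)].
Proof.
move=> H q K.
have hq0 : (0 <= q %% 6)%Z by rewrite modz_ge0.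
have hq6 : (q %% 6 < 6)%Z by rewrite ltz_pmod.
have hK0 : (0 <= K %% 6)%Z by rewrite modz_ge0.
have hK6 : (K %% 6 < 6)%Z by rewrite ltz_pmod.
have [r [dl [h1 h2 h3 h4 h5]]] := H (q %% 6)%Z (K %% 6)%Z hq0 hq6 hK0 hK6.
exists r, dl; split => //.
by rewrite -modzDml h5 /sig modzDml.
Qed.

Lemma pierce_one (w h : R) (rmax dmax : int) :
  (forall q K : int, exists r dl : int, [/\ (0 <= r)%R, (r <= rmax)%R, (0 <= dl)%R, (dl <= dmax)%R
                          & ((q + dl) %% 6)%Z = sig (K + r)]) ->
  (1 + dmax%:~R) / 6 <= w -> 1 + rmax%:~R <= h ->
  forall x y : R, exists p, P0 p /\ translate (w, h) x y p.
Proof.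
move=> H hw hh x y.
have [r [dl [r0 r1 d0 d1 hm]]] := H (Num.floor (6 * x) + 1) (Num.floor y + 1).
exists (((Num.floor (6 * x) + 1 + dl)%:~R) / 6, ((Num.floor y + 1 + r)%:~R)).
split.
  by exists (Num.floor (6 * x) + 1 + dl), (Num.floor y + 1 + r).
have /andP[fx1 fx2] := floor_itv (6 * x).
have /andP[fy1 fy2] := floor_itv y.
rewrite !rmorphD /= in fx2 fy2 *.
have r0' : 0 <= r%:~R :> R by rewrite (ler_int R 0 r).
have r1' : r%:~R <= rmax%:~R :> R by rewrite ler_int.
have d0' : 0 <= dl%:~R :> R by rewrite (ler_int R 0 dl).
have d1' : dl%:~R <= dmax%:~R :> R by rewrite ler_int.
rewrite /translate /=.
move: fx1 fx2 fy1 fy2; move: (Num.floor (6 * x))%:~R (Num.floor y)%:~R => a b *.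
by repeat (apply/andP; split); lra.
Qed.




Lemma sig_bounds (k : int) : (0 <= sig k)%R /\ (sig k <= 5)%R.
Proof.
rewrite /sig; have : (absz (k %% 6)%Z < 6)%N.
  have h0 : (0 <= k %% 6)%Z by rewrite modz_ge0.
  have h6 : (k %% 6 < 6)%Z by rewrite ltz_pmod.
  lia.
move: (absz _) => t ht.
have [->|[->|[->|[->|[->|->]]]]] : (t = 0 \/ t = 1 \/ t = 2 \/ t = 3 \/ t = 4 \/ t = 5)%N by lia.
all: by split.
Qed.

Definition fdec (n idx : nat) : R * R :=
  let M := (2 * n + 2)%N in
  let k : int := ((idx %/ M)%N)%:Z - n%:Z in
  let m : int := ((idx %% M)%N)%:Z - n%:Z - 1 in
  ((6 * m + sig k)%:~R / 6, k%:~R).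

Lemma P0_count (r : R) (n : nat) : 0 < r -> r < n%:R ->
  ((P0 `&` square r) #<= `I_((2 * n) * (2 * n + 2)))%card.
Proof.
move=> r0 rn.
apply: (@card_le_trans _ _ _ (fdec n @` `I_((2 * n) * (2 * n + 2)))); last first.
  exact: card_image_le.
apply: subset_card_le => p [[a [k [pE hmod]]] hsq].
move: hsq; rewrite pE /square /= => -[/andP[ha1 ha2] /andP[hk1 hk2]].
have [s0 s5] := sig_bounds k.
have hs0 : 0 <= (sig k)%:~R :> R by rewrite (ler_int R 0).
have hs5 : (sig k)%:~R <= 5 :> R by rewrite (ler_int R _ 5).
have aE : a = (a %/ 6)%Z * 6 + sig k by rewrite {1}(divz_eq a 6) hmod.
move: (a %/ 6)%Z aE => m aE.
have hk1' : (- n%:Z < k)%R.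
  rewrite -(ltr_int R) rmorphN /=; lra.
have hk2' : (k < n%:Z)%R.
  rewrite -(ltr_int R) /=; lra.
have ham : a%:~R = m%:~R * 6 + (sig k)%:~R :> R by rewrite aE rmorphD rmorphM.
have hm1 : (- n%:Z - 1 < m)%R.
  rewrite -(ltr_int R) rmorphB rmorphN /=; lra.
have hm2 : (m < n%:Z)%R.
  rewrite -(ltr_int R) /=; lra.
pose i := absz (k + n%:Z). pose j := absz (m + n%:Z + 1).
have iE : (i%:Z = k + n%:Z)%R by rewrite /i; lia.
have jE : (j%:Z = m + n%:Z + 1)%R by rewrite /j; lia.
have hi : (i < 2 * n)%N by lia.
have hj : (j < 2 * n + 2)%N by lia.
exists (i * (2 * n + 2) + j)%N.
  rewrite /=; nia.
have e1 : ((i * (2 * n + 2) + j) %/ (2 * n + 2) = i)%N.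
  rewrite divnMDl; last by lia.
  by rewrite (divn_small hj) addn0.
have e2 : ((i * (2 * n + 2) + j) %% (2 * n + 2) = j)%N by rewrite modnMDl modn_small.
rewrite /fdec /= e1 e2.
congr (_, _).
  congr (_ / 6); rewrite aE; congr (_%:~R).
  have -> : (i%:Z - n%:Z = k)%R by lia.
  lia.
by congr (_%:~R); lia.
Qed.



Lemma ecard_P0 (r : R) (n : nat) : 0 < r -> r < n%:R ->
  (ecard (P0 `&` square r) <= (((2 * n) * (2 * n + 2))%N%:R)%:E)%E.
Proof.
move=> r0 rn; have hc := P0_count r0 rn.
rewrite /ecard; case: pselect => [fin|nfin].
  by rewrite lee_fin ler_nat; exact: geq_card_fset_set.
by exfalso; apply: nfin; apply/finite_set_leP; exists ((2 * n) * (2 * n + 2))%N.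
Qed.

Lemma density_P0 : (density P0 <= (1 + 1/100)%:E)%E.
Proof.
rewrite /density.
apply: (@le_trans _ _ (ereal_sup [set (ecard (P0 `&` square r) * ((2 * r) ^+ 2)^-1%:E)%E
                                   | r in [set r | 400 < r]])).
  by apply: ereal_inf_lbound; exists 400.
apply/ereal_supP => _ [r hr <-].
have r0 : 0 < r by move: hr => /= hr; lra.
have /andP[t1 t2] := truncn_itv (ltW r0).
set n := (Num.truncn r).+1.
have rn : r < n%:R by [].
have nr : n%:R <= r + 1 by rewrite /n -addn1 natrD; lra.
have hE := ecard_P0 r0 rn.
have hpos : (0 <= ((2 * r) ^+ 2)^-1%:E)%E.
  by rewrite lee_fin invr_ge0 exprn_ge0 // mulr_ge0 // ltW.
apply: (le_trans (lee_wpmul2r hpos hE)).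
rewrite -EFinM lee_fin ler_pdivrMr; last by rewrite exprn_gt0 // mulr_gt0.
rewrite !(natrM, natrD) /=.
move: hr => /= hr.
have n0 : 0 <= n%:R :> R by apply: ler0n.
move: nr n0; move: (n%:R) => x nr x0.
have xx : x * x <= (r + 1) * (r + 1) by apply: ler_pM.
have rr : 400 * r <= r * r by apply: ler_wpM2r; lra.
rewrite expr2; lra.
Qed.

Lemma P0_pierce : piercing F0 P0.
Proof.
move=> rect; rewrite /F0 !inE => /orP[/eqP->|/orP[/eqP->|/eqP->]].
- apply: (pierce_one (rmax := 0) (dmax := 5)); [exact: comb_lift combS | lra | lra].
- apply: (pierce_one (rmax := 3) (dmax := 1)); [exact: comb_lift combR4 | lra | lra].
- apply: (pierce_one (rmax := 5) (dmax := 0)); [exact: comb_lift combR6 | lra | lra].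
Qed.

Theorem theorem4 :
  exists (F0 : seq (R * R)) (eps : R),
    [/\ size F0 = 3%N, uniq F0, (forall rect, rect \in F0 -> 0 < rect.1 /\ 0 < rect.2),
        0 < eps & (piL_dens F0 >= pi_dens F0 + eps%:E)%E].
Proof.
exists F0, (1/10000); split.
- by [].
- have n1 : (1, 1) != (1/3, 4) :> R * R by apply/eqP => -[]; lra.
  have n2 : (1, 1) != (1/6, 6) :> R * R by apply/eqP => -[]; lra.
  have n3 : (1/3, 4) != (1/6, 6) :> R * R by apply/eqP => -[]; lra.
  by rewrite /F0 /= !inE !negb_or n1 n2 n3.
- move=> rect; rewrite /F0 !inE => /orP[/eqP->|/orP[/eqP->|/eqP->]] /=; split; lra.
- lra.
- have h1 : (pi_dens F0 <= (1 + 1/100)%:E)%E.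
    apply: le_trans density_P0.
    by apply: ereal_inf_lbound; exists P0 => //; exact: P0_pierce.
  have h2 : ((100/99)%:E <= piL_dens F0)%E.
    apply/ereal_infP => _ [[u v] /= [dn0 hp] <-].
    have hb := lat_bound dn0 hp.
    have d0 : 0 < `|det2 u v| by rewrite normr_gt0.
    rewrite lee_fin.
    move: hb d0; move: (`|det2 u v|) => d hb d0.
    rewrite -[d^-1]mul1r ler_pdivlMr //; lra.
  apply: le_trans h2.
  apply: (le_trans (leeD2r _ h1)).
  by rewrite -EFinD lee_fin; lra.
Qed.
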